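(* Fix $\theta\in(0,1)$ and an integer $N\ge 1$ with $N \le \frac{1}{4\theta(1-\theta)}-1$. Then there exists a temperature $\tilde\tau>0$ (depending on $N$ and $\theta$) such that $$\mathrm{MSE}\big(\hat\nabla^{\mathsf{grad}}_{\tilde\tau,N}\big) < \mathrm{MSE}\big(\hat\nabla^{\mathsf{RF}}_{N}\big).$$ Moreover, for every fixed $N\ge1$ and $\theta=1/k$ with $k\to\infty$, one has $\mathrm{MSE}(\hat\nabla^{\mathsf{RF}}_{N})=\Omega(k)$, while for each such $\theta$ there is $\tilde\tau>0$ with $\mathrm{MSE}(\hat\nabla^{\mathsf{grad}}_{\tilde\tau,N})<4$. The same holds for $\theta=1-1/k$, $k\to\infty$.
   Context: Binary action setting: actions $A\in\{-1,1\}$ are drawn from the policy $\pi_\theta$ with $\pi_\theta(-1)=\theta$, $\pi_\theta(1)=1-\theta$, for a parameter $\theta\in(0,1)$. Let $G(a)=a$ and $H(\theta)=\mathbb{E}_{A\sim\pi_\theta}[G(A)]$, so the true gradient is $\nabla_\theta H(\theta)=\frac{d}{d\theta}H(\theta)$. REINFORCE estimator: given $N$ i.i.d. samples $A_1,\dots,A_N\sim\pi_\theta$, $\hat\nabla^{\mathsf{RF}}_N=\frac1N\sum_{i=1}^N G(A_i)\,\nabla_\theta\log\pi_\theta(A_i)$. Smoothed pathwise estimator: for temperature $\tau>0$ and $U\sim\mathrm{Uniform}[0,1]$ let $h_\tau(U,\theta)=\frac{\exp((U-\theta)/\tau)-1}{\exp((U-\theta)/\tau)+1}$ (a smoothing of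 $2\mathbf{1}\{U>\theta\}-1$, which has the law of $A$). Given $N$ i.i.d. $U_1,\dots,U_N\sim\mathrm{Uniform}[0,1]$, $\hat\nabla^{\mathsf{grad}}_{\tau,N}=\frac1N\sum_{i=1}^N \nabla_\theta G(h_\tau(U_i,\theta))=\frac1N\sum_{i=1}^N \frac{\partial}{\partial\theta}h_\tau(U_i,\theta)$. For an estimator $\hat\nabla$, $\mathrm{MSE}(\hat\nabla)=\mathbb{E}\big[(\hat\nabla-\nabla_\theta H(\theta))^2\big]$. *)

(* Defs.v *)
From Stdlib Require Import Reals List.
From Coquelicot Require Import Coquelicot.
Import ListNotations.
Open Scope R_scope.

Definition G (a : R) : R := a.

(* Policy pi_theta on actions {-1, 1}: pi_theta(-1) = theta, pi_theta(1) = 1 - theta. *)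
Definition pi (t a : R) : R := if Req_EM_T a (-1) then t else 1 - t.

Definition H (t : R) : R := pi t (-1) * G (-1) + pi t 1 * G 1.

Definition true_grad (theta : R) : R := Derive H theta.

(* Expectation of f(A_1,...,A_n) for A_i i.i.d. ~ pi_theta (finite sum over {-1,1}^n). *)
Fixpoint E_pi (theta : R) (n : nat) (f : list R -> R) : R :=
  match n with
  | O => f []
  | S m => pi theta (-1) * E_pi theta m (fun l => f ((-1) :: l))
           + pi theta 1 * E_pi theta m (fun l => f (1 :: l))
  end.

(* Expectation of f(U_1,...,U_n) for U_i i.i.d. ~ Uniform[0,1]
   (iterated integral over [0,1]^n). *)
Fixpoint E_unif (n : nat) (f : list R -> R) : R :=
  match n with
  | O => f []
  | S m => RInt (fun u => E_unif m (fun l => f (u :: l))) 0 1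
  end.

Definition list_sum (l : list R) : R := fold_right Rplus 0 l.

Definition RF_est (N : nat) (theta : R) (A : list R) : R :=
  / INR N * list_sum (map (fun a => G a * Derive (fun t => ln (pi t a)) theta) A).

Definition h (tau u t : R) : R := (exp ((u - t) / tau) - 1) / (exp ((u - t) / tau) + 1).

Definition grad_est (tau : R) (N : nat) (theta : R) (U : list R) : R :=
  / INR N * list_sum (map (fun u => Derive (fun t => G (h tau u t)) theta) U).

Definition MSE_RF (N : nat) (theta : R) : R :=
  E_pi theta N (fun A => (RF_est N theta A - true_grad theta) ^ 2).

Definition MSE_grad (tau : R) (N : nat) (theta : R) : R :=
  E_unif N (fun U => (grad_est tau N theta U - true_grad theta) ^ 2).

(* Main.v *)
Require Import Defs.
From Stdlib Require Import Reals Lra Lia Psatz FunctionalExtensionality List.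
From Coquelicot Require Import Coquelicot.
Open Scope R_scope.

Lemma pi_m1 t : pi t (-1) = t.
Proof. unfold pi; destruct (Req_EM_T (-1) (-1)); lra. Qed.
Lemma pi_1 t : pi t 1 = 1 - t.
Proof. unfold pi; destruct (Req_EM_T 1 (-1)); lra. Qed.

Lemma true_grad_eq th : true_grad th = -2.
Proof.
  unfold true_grad. rewrite (Derive_ext H (fun t => 1 - 2 * t)).
  - apply is_derive_unique. auto_derive; auto; ring.
  - intro t. unfold H, G. rewrite pi_m1, pi_1. ring.
Qed.

Lemma E_pi_quad th k (psi : R -> R) m : forall c,
  E_pi th m (fun l => (c + k * Defs.list_sum (map psi l)) ^ 2) =
  c^2 + 2*c*INR m*k*(th*psi(-1) + (1-th)*psi 1)
  + INR m * k^2 * (th*psi(-1)^2 + (1-th)*psi 1 ^2)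
  + INR m * (INR m - 1) * k^2 * (th*psi(-1) + (1-th)*psi 1)^2.
Proof.
  induction m; intro c.
  - simpl. unfold Defs.list_sum; simpl. ring.
  - cbn [E_pi]. rewrite pi_m1, pi_1.
    replace (fun l => (c + k * Defs.list_sum (map psi (-1 :: l))) ^ 2) with
      (fun l => ((c + k * psi (-1)) + k * Defs.list_sum (map psi l)) ^ 2)
      by (apply functional_extensionality; intro l; unfold Defs.list_sum; simpl; ring).
    replace (fun l => (c + k * Defs.list_sum (map psi (1 :: l))) ^ 2) with
      (fun l => ((c + k * psi 1) + k * Defs.list_sum (map psi l)) ^ 2)
      by (apply functional_extensionality; intro l; unfold Defs.list_sum; simpl; ring).
    rewrite !IHm, S_INR. ring.
Qed.

Lemma RInt_quad (psi : R -> R) A B C :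
  ex_RInt psi 0 1 -> ex_RInt (fun u => psi u ^ 2) 0 1 ->
  RInt (fun u => A + B * psi u + C * psi u ^ 2) 0 1
  = A + B * RInt psi 0 1 + C * RInt (fun u => psi u ^ 2) 0 1.
Proof.
  intros H1 H2.
  apply is_RInt_unique.
  apply (is_RInt_ext (fun u => plus (plus (scal A 1) (scal B (psi u))) (scal C (psi u ^ 2)))).
  { intros x _. unfold plus, scal; simpl. unfold mult; simpl. ring. }
  replace (A + B * RInt psi 0 1 + C * RInt (fun u => psi u ^ 2) 0 1) with
    (plus (plus (scal (1 - 0) (scal A 1)) (scal B (RInt psi 0 1)))
          (scal C (RInt (fun u => psi u ^ 2) 0 1))).
  2:{ unfold plus, scal; simpl. unfold mult; simpl. ring. }
  apply (@is_RInt_plus R_NormedModule); [apply (@is_RInt_plus R_NormedModule)|].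
  - apply (@is_RInt_const R_NormedModule).
  - apply (@is_RInt_scal R_NormedModule). apply (@RInt_correct R_CompleteNormedModule); auto.
  - apply (@is_RInt_scal R_NormedModule). apply (@RInt_correct R_CompleteNormedModule); auto.
Qed.

Lemma E_unif_quad k (psi : R -> R) m :
  ex_RInt psi 0 1 -> ex_RInt (fun u => psi u ^ 2) 0 1 -> forall c,
  E_unif m (fun l => (c + k * Defs.list_sum (map psi l)) ^ 2) =
  c^2 + 2*c*INR m*k*RInt psi 0 1
  + INR m * k^2 * RInt (fun u => psi u ^ 2) 0 1
  + INR m * (INR m - 1) * k^2 * (RInt psi 0 1)^2.
Proof.
  intros H1 H2. induction m; intro c.
  - simpl. unfold Defs.list_sum; simpl. ring.
  - cbn [E_unif].
    pose (I1 := (RInt psi 0 1 : R)). pose (I2 := (RInt (fun u => psi u ^ 2) 0 1 : R)).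
    rewrite (RInt_ext _ (fun u => (c^2 + 2*c*INR m*k*I1 + INR m*k^2*I2 + INR m*(INR m-1)*k^2*I1^2)
       + (2*c*k + 2*INR m*k^2*I1) * psi u + k^2 * psi u ^2)).
    + rewrite RInt_quad by auto. fold I1 I2. rewrite S_INR. ring.
    + intros u _; match goal with |- ?a = ?b => change (@eq R a b) end.
      replace (fun l => (c + k * Defs.list_sum (map psi (u :: l))) ^ 2) with
        (fun l => ((c + k * psi u) + k * Defs.list_sum (map psi l)) ^ 2)
        by (apply functional_extensionality; intro l; unfold Defs.list_sum; simpl; ring).
      rewrite IHm. fold I1 I2. ring.
Qed.
Definition gg (th u : R) : R := -2 * exp (u - th) / (exp (u - th) + 1) ^ 2.

Lemma Derive_h th u : Derive (fun t => G (h 1 u t)) th = gg th u.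
Proof.
  apply is_derive_unique. unfold G, h, gg.
  assert (He : 0 < exp (u - th)) by apply exp_pos.
  auto_derive; replace ((u + - th) * / 1) with (u - th) by field.
  - lra.
  - field. lra.
Qed.

Lemma gg_bounds th u : 0 < th < 1 -> 0 <= u <= 1 -> -1/2 <= gg th u <= -1/4.
Proof.
  intros Ht Hu. unfold gg.
  assert (E3 : exp (u - th) <= 3).
  { apply Rle_trans with (exp 1); [|apply exp_le_3].
    destruct (Req_dec (u - th) 1). rewrite H; lra. left; apply exp_increasing; lra. }
  assert (E13 : 1/3 <= exp (u - th)).
  { assert (exp (-(u - th)) <= 3).
    { apply Rle_trans with (exp 1); [|apply exp_le_3].
      destruct (Req_dec (-(u - th)) 1). rewrite H; lra. left; apply exp_increasing; lra. }
    assert (exp (u - th) * exp (-(u - th)) = 1).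
    { rewrite <- exp_plus. replace (u - th + - (u - th)) with 0 by ring. apply exp_0. }
    assert (0 < exp (u - th)) by apply exp_pos. nra. }
  set (E := exp (u - th)) in *.
  assert (0 < (E + 1) ^ 2) by nra.
  split.
  - apply Rmult_le_reg_r with ((E+1)^2); auto. unfold Rdiv.
    rewrite (Rmult_assoc (-2 * E)), Rinv_l by lra. pose proof (pow2_ge_0 (E - 1)). simpl in *. nra.
  - apply Rmult_le_reg_r with ((E+1)^2); auto. unfold Rdiv.
    rewrite (Rmult_assoc (-2 * E)), Rinv_l by lra. simpl in *. nra.
Qed.

Lemma gg_cont th u : continuous (gg th) u.
Proof.
  apply (@ex_derive_continuous R_AbsRing R_NormedModule). unfold gg.
  assert (0 < exp (u - th)) by apply exp_pos.
  auto_derive. replace (u + - th) with (u - th) by ring. nra.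
Qed.

Lemma ex_gg th : ex_RInt (gg th) 0 1.
Proof. apply (@ex_RInt_continuous R_CompleteNormedModule). intros; apply gg_cont. Qed.

Lemma ex_gg2 th : ex_RInt (fun u => gg th u ^ 2) 0 1.
Proof.
  apply (@ex_RInt_continuous R_CompleteNormedModule). intros z _.
  apply (@ex_derive_continuous R_AbsRing R_NormedModule). unfold gg.
  assert (0 < exp (z - th)) by apply exp_pos.
  auto_derive. replace (z + - th) with (z - th) by ring. nra.
Qed.

Lemma MSE_grad_lt4 th N : 0 < th < 1 -> (1 <= N)%nat -> MSE_grad 1 N th < 4.
Proof.
  intros Ht HN. unfold MSE_grad.
  replace (fun U => (grad_est 1 N th U - true_grad th) ^ 2) with
    (fun U => (2 + / INR N * Defs.list_sum (map (gg th) U)) ^ 2).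
  2:{ apply functional_extensionality; intro U. unfold grad_est.
      rewrite true_grad_eq. rewrite (map_ext (fun u => Derive (fun t => G (h 1 u t)) th) (gg th)) by (intro; apply Derive_h). ring. }
  rewrite (E_unif_quad (/ INR N) (gg th) N (ex_gg th) (ex_gg2 th)).
  assert (Hn : 1 <= INR N) by (apply (le_INR 1); auto).
  set (n := INR N) in *.
  assert (B1 : -1/2 <= RInt (gg th) 0 1 <= -1/4).
  { split.
    - assert (HH := RInt_le (fun _ => -1/2) (gg th) 0 1 ltac:(lra) (ex_RInt_const _ _ _) (ex_gg th)
        ltac:(intros x Hx; apply gg_bounds; lra)).
      rewrite RInt_const in HH. unfold scal in HH; simpl in HH; unfold mult in HH; simpl in HH. lra.
    - assert (HH := RInt_le (gg th) (fun _ => -1/4) 0 1 ltac:(lra) (ex_gg th) (ex_RInt_const _ _ _)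
        ltac:(intros x Hx; apply gg_bounds; lra)).
      rewrite RInt_const in HH. unfold scal in HH; simpl in HH; unfold mult in HH; simpl in HH. lra. }
  assert (B2 : RInt (fun u => gg th u ^ 2) 0 1 <= 1/4).
  { assert (HH := RInt_le (fun u => gg th u ^ 2) (fun _ => 1/4) 0 1 ltac:(lra) (ex_gg2 th) (ex_RInt_const _ _ _)
        ltac:(intros x Hx; pose proof (gg_bounds th x ltac:(lra) ltac:(lra)); nra)).
    rewrite RInt_const in HH. change (scal (1 - 0) (1/4)) with ((1 - 0) * (1/4)) in HH. lra. }
  set (I1 := RInt (gg th) 0 1) in *. set (I2 := RInt (fun u => gg th u ^ 2) 0 1) in *.
  set (w := / n).
  assert (Hw : n * w = 1) by (unfold w; field; lra).
  assert (Hw0 : 0 < w <= 1).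
  { unfold w. split. apply Rinv_0_lt_compat; lra.
    rewrite <- Rinv_1. apply Rinv_le_contravar; lra. }
  replace (2 ^ 2 + 2 * 2 * n * w * I1 + n * w ^ 2 * I2 + n * (n - 1) * w ^ 2 * I1 ^ 2)
    with (4 + 4 * I1 + I2 * w + (1 - w) * I1 ^ 2).
  2:{ replace (n * (n - 1) * w ^ 2) with ((n*w) * (n*w) - (n*w)*w) by ring.
      replace (n * w ^ 2) with ((n*w)*w) by ring. replace (2 * 2 * n * w) with (4 * (n*w)) by ring.
      rewrite Hw. ring. }
  assert (0 <= (1/4 - I2) * w) by nra.
  assert (I1^2 <= 1/4) by nra. assert (0 <= (1 - w) * (1/4 - I1^2)) by (apply Rmult_le_pos; lra).
  nra.
Qed.

Lemma MSE_RF_eq th N : 0 < th < 1 -> (1 <= N)%nat ->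
  MSE_RF N th = (1 / (th * (1 - th)) - 4) / INR N.
Proof.
  intros Ht HN. unfold MSE_RF.
  set (psi := fun a => G a * Derive (fun t => ln (pi t a)) th).
  replace (fun A => (RF_est N th A - true_grad th) ^ 2) with
    (fun A => (2 + / INR N * Defs.list_sum (map psi A)) ^ 2).
  2:{ apply functional_extensionality; intro U. unfold RF_est.
      rewrite true_grad_eq. fold psi. ring. }
  rewrite E_pi_quad.
  assert (P1 : psi (-1) = - (1 / th)).
  { unfold psi, G. rewrite (Derive_ext _ (fun t => ln t)) by (intro; rewrite pi_m1; auto).
    replace (Derive (fun t => ln t) th) with (1 / th). ring.
    symmetry; apply is_derive_unique. auto_derive. lra. field. lra. }
  assert (P2 : psi 1 = - (1 / (1 - th))).
  { unfold psi, G. rewrite (Derive_ext _ (fun t => ln (1 - t))) by (intro; rewrite pi_1; auto).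
    replace (Derive (fun t => ln (1 - t)) th) with (- (1 / (1 - th))). ring.
    symmetry; apply is_derive_unique. auto_derive. lra. field. lra. }
  rewrite P1, P2.
  assert (Hn : 1 <= INR N) by (apply (le_INR 1); auto).
  field. lra.
Qed.

Lemma inv_bounds th : 0 < th < 1 ->
  1 / th <= 1 / (th * (1 - th)) /\ 1 / (1 - th) <= 1 / (th * (1 - th)).
Proof.
  intros Ht. unfold Rdiv. rewrite !Rmult_1_l. split; apply Rinv_le_contravar; nra.
Qed.

Lemma part_rf N (th r : R) : (1 <= N)%nat -> 0 < th < 1 -> 8 <= r ->
  r <= 1 / (th * (1 - th)) -> 1 / (2 * INR N) * r <= MSE_RF N th.
Proof.
  intros HN Ht Hr HX. rewrite MSE_RF_eq by auto.
  assert (Hn : 1 <= INR N) by (apply (le_INR 1); auto).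
  set (X := 1 / (th * (1 - th))) in *.
  replace (1 / (2 * INR N) * r) with ((r/2) * / INR N) by (field; lra).
  unfold Rdiv at 2. apply Rmult_le_compat_r. left; apply Rinv_0_lt_compat; lra. lra.
Qed.

Lemma inr_k k : (2 <= k)%nat -> 0 < 1 / INR k < 1 /\ 2 <= INR k.
Proof.
  intros Hk. assert (2 <= INR k) by (apply (le_INR 2); auto).
  split; [split|]; auto.
  - apply Rdiv_lt_0_compat; lra.
  - apply Rmult_lt_reg_r with (INR k); [lra|]. field_simplify; lra.
Qed.

Theorem theorem1 :
  (* Part 1 *)
  (forall (theta : R) (N : nat),
      0 < theta < 1 -> (1 <= N)%nat ->
      INR N <= 1 / (4 * theta * (1 - theta)) - 1 ->
      exists tau : R, 0 < tau /\ MSE_grad tau N theta < MSE_RF N theta)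
  /\
  (* Part 2: theta = 1/k, k -> infinity *)
  (forall N : nat, (1 <= N)%nat ->
      (exists c : R, 0 < c /\ exists K : nat, forall k : nat, (K <= k)%nat ->
          c * INR k <= MSE_RF N (1 / INR k))
      /\ (forall k : nat, (2 <= k)%nat ->
          exists tau : R, 0 < tau /\ MSE_grad tau N (1 / INR k) < 4))
  /\
  (* Part 3: theta = 1 - 1/k, k -> infinity *)
  (forall N : nat, (1 <= N)%nat ->
      (exists c : R, 0 < c /\ exists K : nat, forall k : nat, (K <= k)%nat ->
          c * INR k <= MSE_RF N (1 - 1 / INR k))
      /\ (forall k : nat, (2 <= k)%nat ->
          exists tau : R, 0 < tau /\ MSE_grad tau N (1 - 1 / INR k) < 4)).
Proof.
  split; [|split].
  - intros th N Ht HN Hb. exists 1. split; [lra|].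
    apply Rlt_le_trans with 4. apply MSE_grad_lt4; auto.
    rewrite MSE_RF_eq by auto.
    assert (Hn : 1 <= INR N) by (apply (le_INR 1); auto).
    replace (1 / (4 * th * (1 - th))) with (1 / (th * (1 - th)) / 4) in Hb by (field; lra).
    set (X := 1 / (th * (1 - th))) in *.
    apply Rmult_le_reg_r with (INR N); [lra|].
    field_simplify; lra.
  - intros N HN. split.
    + exists (1 / (2 * INR N)). split.
      { assert (1 <= INR N) by (apply (le_INR 1); auto). apply Rdiv_lt_0_compat; lra. }
      exists 8%nat. intros k Hk.
      destruct (inr_k k ltac:(lia)) as [Ht _].
      assert (8 <= INR k) by (replace 8 with (INR 8) by (simpl; lra); apply le_INR; auto).
      apply part_rf; auto.
      destruct (inv_bounds _ Ht) as [B _].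
      replace (1 / (1 / INR k)) with (INR k) in B by (field; lra). exact B.
    + intros k Hk. exists 1. split; [lra|]. apply MSE_grad_lt4; auto.
      apply inr_k; auto.
  - intros N HN. split.
    + exists (1 / (2 * INR N)). split.
      { assert (1 <= INR N) by (apply (le_INR 1); auto). apply Rdiv_lt_0_compat; lra. }
      exists 8%nat. intros k Hk.
      destruct (inr_k k ltac:(lia)) as [Ht _].
      assert (8 <= INR k) by (replace 8 with (INR 8) by (simpl; lra); apply le_INR; auto).
      apply part_rf; auto. lra.
      destruct (inv_bounds (1 - 1 / INR k) ltac:(lra)) as [_ B].
      replace (1 / (1 - (1 - 1 / INR k))) with (INR k) in B by (field; lra). exact B.
    + intros k Hk. exists 1. split; [lra|]. apply MSE_grad_lt4; auto.
      destruct (inr_k k Hk). lra.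
Qed.
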